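(* Let $X,Y$ be finite sets. (1) For filtrations $F_X,F_Y$ over $X,Y$, $d_{\mathrm{B}}(\mathbf{mgm}(F_X),\mathbf{mgm}(F_Y))\leq d_{\mathrm{T}}(F_X,F_Y)$. (2) For phylogenetic networks $N_X,N_Y$ over $X,Y$ with Vietoris–Rips filtrations $\mathbf{VR}_X,\mathbf{VR}_Y$, $d_{\mathrm{B}}(\mathbf{mgm}(\mathbf{VR}_X),\mathbf{mgm}(\mathbf{VR}_Y))\leq d_{\mathrm{GH}}((X,N_X),(Y,N_Y))$.
   Context: Filtration over $X$: order-preserving $F_X$ from nonempty subsets of $X$ (under inclusion) to $\mathbb{R}$. Mergegram $\mathbf{mgm}(F_X)$: multiset of the nonempty intervals $I_\sigma=[F_X(\sigma),\min_{\sigma\subsetneq\tau\subset X}F_X(\tau))$ ($\min\emptyset=\infty$), one per nonempty $\sigma\subset X$. Bottleneck distance $d_{\mathrm{B}}$ between multisets of intervals $[a,b)$ ($b\in\mathbb{R}\cup\{\infty\}$): infimum of $\varepsilon$ admitting a partial bijection with matched endpoints differing by at most $\varepsilon$ in each coordinate ($|\infty-\infty|=0$) and unmatched intervals of length at most $2\varepsilon$. Pullback along a surjection $\varphi:Z\twoheadrightarrow X$: $\varphi^*F_X(\kappa)=F_X(\varphi(\kappa))$. Tripod distance: $d_{\mathrm{T}}(F_X,F_Y):=\inf\max_{\emptyset\neq\kappa\subset Z}|\varphi_X^*F_X(\kappa)-\varphi_Y^*F_Y(\kappa)|$ over finite sets $Z$ and surjections $\varphi_X:Z\twoheadrightarrow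 X$, $\varphi_Y:Z\twoheadrightarrow Y$. A phylogenetic network over $X$ is $N_X:X\times X\to\mathbb{R}$, symmetric, with $\max\{N_X(x,x),N_X(x',x')\}\leq N_X(x,x')$; $\mathbf{VR}_X(\sigma):=\max_{x,x'\in\sigma}N_X(x,x')$. $d_{\mathrm{GH}}((X,N_X),(Y,N_Y)):=\inf\max_{z,z'\in Z}|N_X(\varphi_X(z),\varphi_X(z'))-N_Y(\varphi_Y(z),\varphi_Y(z'))|$ over the same tripods. *)

(* Defs.v *)
From HB Require Import structures.
From mathcomp Require Import all_boot all_order all_algebra.
From mathcomp Require Import boolp classical_sets reals constructive_ereal ereal.
Set Implicit Arguments. Unset Strict Implicit. Unset Printing Implicit Defensive.
Import Order.TTheory GRing.Theory Num.Theory.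
Local Open Scope classical_set_scope.
Local Open Scope ring_scope.

Section Defs.
Variable R : realType.

(* A filtration over X: order-preserving map from nonempty subsets to R
   (its value on the empty set is irrelevant and unconstrained). *)
Definition filtration (X : finType) (F : {set X} -> R) : Prop :=
  forall s t : {set X}, s != finset.set0 -> s \subset t -> F s <= F t.

(* death time: min over strict supersets, min of empty = +oo *)
Definition death (X : finType) (F : {set X} -> R) (s : {set X}) : \bar R :=
  ereal_inf [set (F t)%:E | t in [set t : {set X} | s \proper t]].

(* intervals [a, b) with a : R and b : \bar R (b = +oo for infinity) *)
Definition interval := (R * \bar R)%type.

(* mergegram: multiset (as a sequence) of the nonempty intervals I_s,
   one per nonempty subset s *)
Definition mgm (X : finType) (F : {set X} -> R) : seq interval :=
  [seq (F s, death F s) |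
     s <- enum (finset.finset (fun s : {set X} => (s != finset.set0) && ((F s)%:E < death F s)%E))].

(* endpoint closeness with the convention |oo - oo| = 0 *)
Definition death_close (d d' : \bar R) (e : R) : Prop :=
  match d, d' with
  | EFin r, EFin r' => `|r - r'| <= e
  | +oo%E, +oo%E => 0 <= e
  | _, _ => False
  end.

Definition short_interval (I : interval) (e : R) : Prop :=
  (I.2 - (I.1)%:E <= (2 * e)%:E)%E.

(* e-matching between multisets s and t: partial bijection f between
   positions of s and positions of t *)
Definition eps_matching (s t : seq interval) (e : R) : Prop :=
  exists f : 'I_(size s) -> option 'I_(size t),
    (forall i i' j, f i = Some j -> f i' = Some j -> i = i') /\
    (forall i j, f i = Some j ->
        `|(tnth (in_tuple s) i).1 - (tnth (in_tuple t) j).1| <= e /\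
        death_close (tnth (in_tuple s) i).2 (tnth (in_tuple t) j).2 e) /\
    (forall i, f i = None -> short_interval (tnth (in_tuple s) i) e) /\
    (forall j, (forall i, f i <> Some j) -> short_interval (tnth (in_tuple t) j) e).

Definition bottleneck (s t : seq interval) : \bar R :=
  ereal_inf [set e%:E | e in [set e : R | 0 <= e /\ eps_matching s t e]].

Definition surj (A B : Type) (f : A -> B) : Prop := forall b, exists a, f a = b.

Definition pullback (Z X : finType) (phi : Z -> X) (F : {set X} -> R) :
  {set Z} -> R := fun k => F (phi @: k).

(* distortion of a tripod for filtrations; max over the empty set is 0 *)
Definition filt_distortion (Z X Y : finType) (pX : Z -> X) (pY : Z -> Y)
  (F : {set X} -> R) (G : {set Y} -> R) : R :=
  \big[Num.max/0]_(k : {set Z} | k != finset.set0)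
     `|pullback pX F k - pullback pY G k|.

Definition tripod_dist (X Y : finType) (F : {set X} -> R) (G : {set Y} -> R)
  : \bar R :=
  ereal_inf [set v%:E | v in [set v : R | exists (Z : finType)
     (pX : Z -> X) (pY : Z -> Y),
     surj pX /\ surj pY /\ v = filt_distortion pX pY F G]].

Definition phylo (X : finType) (N : X -> X -> R) : Prop :=
  (forall x x', N x x' = N x' x) /\
  (forall x x', Num.max (N x x) (N x' x') <= N x x').

(* Vietoris-Rips filtration: max of N over pairs in s (0 on the empty set,
   a value that is never used) *)
Definition VR (X : finType) (N : X -> X -> R) (s : {set X}) : R :=
  match [pick x in s] with
  | Some x0 => \big[Num.max/N x0 x0]_(p in finset.setX s s) N p.1 p.2
  | None => 0
  end.

Definition net_distortion (Z X Y : finType) (pX : Z -> X) (pY : Z -> Y)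
  (N : X -> X -> R) (M : Y -> Y -> R) : R :=
  \big[Num.max/0]_(p : Z * Z) `|N (pX p.1) (pX p.2) - M (pY p.1) (pY p.2)|.

Definition gh_dist (X Y : finType) (N : X -> X -> R) (M : Y -> Y -> R)
  : \bar R :=
  ereal_inf [set v%:E | v in [set v : R | exists (Z : finType)
     (pX : Z -> X) (pY : Z -> Y),
     surj pX /\ surj pY /\ v = net_distortion pX pY N M]].

End Defs.

(* Main.v *)
Require Import Defs.
From HB Require Import structures.
From mathcomp Require Import all_boot all_order all_algebra.
From mathcomp Require Import boolp classical_sets reals constructive_ereal ereal.
From mathcomp Require Import lra.
Import Order.TTheory GRing.Theory Num.Theory.
Local Open Scope ring_scope.

Section Aux.
Variable R : realType.

Lemma death_spec (X : finType) (F : {set X} -> R) (s : {set X}) :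
  (s = [set: X] /\ death F s = +oo%E) \/
  (exists t : {set X}, s \proper t /\ death F s = (F t)%:E /\
     forall t' : {set X}, s \proper t' -> F t <= F t').
Proof.
have [->|ns] := eqVneq s [set: X].
  left; split => //; rewrite /death.
  apply/eqP; rewrite eq_le leey /=; apply/ereal_infP => y [t /= + _].
  by move=> /properP [_ [x _]]; rewrite inE.
right.
have Ps : s \proper [set: X] by rewrite properT.
case: (@arg_minP _ _ _ [set: X] (fun t => s \proper t) F Ps) => t st tmin.
exists t; split => //; split => //.
apply/le_anti/andP; split.
  by apply: ge_ereal_inf; exists (F t)%:E => //; exists t.
by apply/ereal_infP => y [t' /= st' <-]; rewrite lee_fin; apply: tmin.
Qed.

Lemma tnth_map_in {T : eqType} (x0 : T) (s : seq T) (h : T -> Defs.interval R)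
  (i : 'I_(size (map h s))) :
  tnth (in_tuple (map h s)) i = h (nth x0 s i).
Proof.
rewrite (tnth_nth (h x0)) /= (nth_map x0) //.
by rewrite -(size_map h) ltn_ord.
Qed.

Lemma match_gen (T : eqType) (x0 : T) (sA sB : seq T) (hP hQ : T -> Defs.interval R)
  (e : R) :
  uniq sA -> uniq sB ->
  (forall x, x \in sA -> x \in sB ->
     `|(hP x).1 - (hQ x).1| <= e /\ death_close (hP x).2 (hQ x).2 e) ->
  (forall x, x \in sA -> x \notin sB -> short_interval (hP x) e) ->
  (forall x, x \in sB -> x \notin sA -> short_interval (hQ x) e) ->
  eps_matching (map hP sA) (map hQ sB) e.
Proof.
move=> uA uB H1 H2 H3.
have szA (i : 'I_(size (map hP sA))) : (i < size sA)%N by rewrite -(size_map hP).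
exists (fun i => insub (index (nth x0 sA i) sB)).
split; last split; last split.
- move=> i i' j; case: insubP => // k _ ek [<-]; case: insubP => // k' _ ek' [ekk].
  have E : index (nth x0 sA i) sB = index (nth x0 sA i') sB by rewrite -ek -ek' ekk.
  have := congr1 (nth x0 sB) E.
  have mi : nth x0 sA i \in sB by rewrite -index_mem -ek -(size_map hQ) ltn_ord.
  have mi' : nth x0 sA i' \in sB by rewrite -index_mem -ek' -(size_map hQ) ltn_ord.
  rewrite !nth_index // => /eqP; rewrite nth_uniq // => /eqP eii.
  by apply: val_inj.
- move=> i j; case: insubP => // k ki ek [<-].
  have mi : nth x0 sA i \in sB by rewrite -index_mem -(size_map hQ).
  rewrite (tnth_map_in x0) (tnth_map_in x0) ek nth_index //.
  by apply: H1 => //; apply: mem_nth.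
- move=> i; case: insubP => // ki _.
  rewrite (tnth_map_in x0); apply: H2; first exact: mem_nth.
  by rewrite -index_mem -(size_map hQ).
- move=> j nj; rewrite (tnth_map_in x0); apply: H3.
    by apply: mem_nth; rewrite -(size_map hQ).
  apply/negP => yA.
  have jB : (j < size sB)%N by rewrite -(size_map hQ).
  have iA : (index (nth x0 sB j) sA < size (map hP sA))%N by rewrite (size_map hP) index_mem.
  apply: (nj (Ordinal iA)) => /=.
  rewrite nth_index // index_uniq //.
  case: insubP => [k _ ek|]; first by congr Some; apply: val_inj.
  by rewrite ltn_ord.
Qed.

Lemma abs_le {a b v : R} : `|a - b| <= v -> a <= b + v /\ b <= a + v.
Proof. rewrite ler_norml => /andP [h1 h2]; split; lra. Qed.

Lemma proper_nonempty {Z : finType} {k t : {set Z}} : k \proper t -> t != finset.set0.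
Proof.
move=> /properP [_ [x xt _]]; apply/set0Pn; by exists x.
Qed.

Lemma notproperT (Z : finType) (t : {set Z}) : ~~ ([set: Z] \proper t).
Proof. by apply/negP => /properP [_ [x _]]; rewrite inE. Qed.

Section OnZ.
Variables (Z : finType) (P Q : {set Z} -> R) (v : R).
Hypothesis hv : 0 <= v.
Hypothesis hPQ : forall k, k != finset.set0 -> `|P k - Q k| <= v.

Lemma close_death k : death_close (death P k) (death Q k) v.
Proof.
case: (@death_spec _ P k) => [[eT dP] | [t1 [p1 [dP m1]]]];
case: (@death_spec _ Q k) => [[eT' dQ] | [t2 [p2 [dQ m2]]]].
- by rewrite dP dQ.
- by move: p2; rewrite eT (negbTE (notproperT _ _)).
- by move: p1; rewrite eT' (negbTE (notproperT _ _)).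
rewrite dP dQ /=.
have [a1 a2] := abs_le (hPQ _ (proper_nonempty p1)).
have [b1 b2] := abs_le (hPQ _ (proper_nonempty p2)).
have := m1 _ p2; have := m2 _ p1 => c1 c2.
rewrite ler_norml; apply/andP; split; lra.
Qed.

Lemma short_of k : k != finset.set0 -> (death Q k <= (Q k)%:E)%E ->
  short_interval (P k, death P k) v.
Proof.
move=> nk.
case: (@death_spec _ Q k) => [[eT dQ] | [t2 [p2 [dQ m2]]]].
  by rewrite dQ.
rewrite dQ lee_fin => h.
case: (@death_spec _ P k) => [[eT dP] | [t1 [p1 [dP m1]]]].
  by move: p2; rewrite eT (negbTE (notproperT _ _)).
rewrite /short_interval /= dP -EFinD lee_fin.
have [a1 a2] := abs_le (hPQ _ nk).
have [b1 b2] := abs_le (hPQ _ (proper_nonempty p2)).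
have := m1 _ p2 => c1.
lra.
Qed.
End OnZ.

Section Pull.
Variables (Z W : finType) (f : Z -> W).
Hypothesis sf : surj f.

Lemma imset_preim (S : {set W}) : f @: (f @^-1: S) = S.
Proof.
apply/setP => y; apply/imsetP/idP => [[z + ->]|yS]; first by rewrite inE.
by have [z fz] := sf y; exists z; rewrite ?inE fz.
Qed.

Lemma preim_inj : injective (fun S : {set W} => f @^-1: S).
Proof. by move=> S1 S2 /= e; rewrite -(imset_preim S1) e imset_preim. Qed.

Lemma preim_nonempty (S : {set W}) : S != finset.set0 -> f @^-1: S != finset.set0.
Proof.
move=> /set0Pn [y yS]; have [z fz] := sf y; apply/set0Pn; exists z.
by rewrite inE fz.
Qed.

Lemma death_le_proper (H : {set Z} -> R) (k t : {set Z}) :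
  k \proper t -> (death H k <= (H t)%:E)%E.
Proof. by move=> kt; apply: ereal_inf_lbound; exists t. Qed.

Lemma death_pull (H : {set W} -> R) (S : {set W}) :
  death H S = death (pullback f H) (f @^-1: S).
Proof.
have codomT (B : {set W}) : B \subset codom f.
  apply/fintype.subsetP => y _; have [z <-] := sf y; exact: codom_f.
case: (@death_spec _ H S) => [[eT dH] | [t1 [p1 [dH m1]]]];
case: (@death_spec _ (pullback f H) (f @^-1: S)) => [[eT' dP] | [t2 [p2 [dP m2]]]].
- by rewrite dH dP.
- by move: p2; rewrite eT preimsetT (negbTE (notproperT _ _)).
- have := preimset_proper (codomT t1) p1.
  by rewrite eT' (negbTE (notproperT _ _)).
rewrite dH dP; congr EFin; apply/le_anti/andP; split.
  apply: m1; rewrite properE; apply/andP; split.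
    by rewrite -(imset_preim S); apply: imsetS; move/properP: p2 => [].
  move/properP: p2 => [_ [z zt2 zS]]; apply/fintype.subsetPn; exists (f z).
    exact: imset_f.
  by move: zS; rewrite inE.
have := m2 _ (preimset_proper (codomT t1) p1).
by rewrite /pullback imset_preim.
Qed.

Lemma side (H : {set W} -> R) (x : {set Z}) :
  x != finset.set0 ->
  x \notin map (fun S : {set W} => f @^-1: S)
    (enum (finset.finset (fun s : {set W} => (s != finset.set0) && ((H s)%:E < death H s)%E))) ->
  (death (pullback f H) x <= (pullback f H x)%:E)%E.
Proof.
move=> nx nin.
have sub : x \subset f @^-1: (f @: x).
  by apply/fintype.subsetP => z zx; rewrite inE; apply: imset_f.
have [e|ne] := eqVneq x (f @^-1: (f @: x)).
  have : f @: x \notin finset.finset (fun s : {set W} => (s != finset.set0) && ((H s)%:E < death H s)%E).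
    apply: contra nin => m; rewrite e; apply: map_f; by rewrite mem_enum.
  rewrite inE negb_and negbK.
  rewrite imset_eq0 (negbTE nx) /= -leNgt => h.
  by rewrite {1}e -death_pull.
have pr : x \proper f @^-1: (f @: x) by rewrite finset.properEneq ne sub.
apply: le_trans (@death_le_proper (pullback f H) _ _ pr) _.
by rewrite /pullback imset_preim.
Qed.
End Pull.

Lemma core (X Y Z : finType) (F : {set X} -> R) (G : {set Y} -> R)
  (pX : Z -> X) (pY : Z -> Y) (v : R) :
  surj pX -> surj pY -> 0 <= v ->
  (forall k : {set Z}, k != finset.set0 -> `|F (pX @: k) - G (pY @: k)| <= v) ->
  eps_matching (mgm F) (mgm G) v.
Proof.
move=> sX sY hv hk.
pose P := pullback pX F; pose Q := pullback pY G.
have hPQ : forall k, k != finset.set0 -> `|P k - Q k| <= v := hk.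
have hQP : forall k, k != finset.set0 -> `|Q k - P k| <= v.
  by move=> k nk; rewrite distrC; exact: hk.
have eA : mgm F = map (fun k => (P k, death P k))
   (map (fun S : {set X} => pX @^-1: S) (enum (finset.finset (fun s : {set X} =>
      (s != finset.set0) && ((F s)%:E < death F s)%E)))).
  rewrite /mgm -map_comp; apply: eq_map => S /=; congr pair.
    by rewrite /P /pullback imset_preim.
  by rewrite /P -death_pull.
have eB : mgm G = map (fun k => (Q k, death Q k))
   (map (fun S : {set Y} => pY @^-1: S) (enum (finset.finset (fun s : {set Y} =>
      (s != finset.set0) && ((G s)%:E < death G s)%E)))).
  rewrite /mgm -map_comp; apply: eq_map => S /=; congr pair.
    by rewrite /Q /pullback imset_preim.
  by rewrite /Q -death_pull.
rewrite eA eB; apply: (@match_gen _ (finset.set0 : {set Z})).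
- by rewrite map_inj_uniq ?enum_uniq //; exact: preim_inj.
- by rewrite map_inj_uniq ?enum_uniq //; exact: preim_inj.
- move=> x xA xB /=.
  have nx : x != finset.set0.
    by case/mapP: xA => S; rewrite mem_enum inE => /andP [nS _] ->; exact: preim_nonempty.
  split; [exact: hPQ | exact: close_death].
- move=> x xA xB.
  have nx : x != finset.set0.
    by case/mapP: xA => S; rewrite mem_enum inE => /andP [nS _] ->; exact: preim_nonempty.
  apply: (@short_of _ P Q v hPQ x nx).
  exact: (@side _ _ pY sY G x nx xB).
- move=> x xB xA.
  have nx : x != finset.set0.
    by case/mapP: xB => S; rewrite mem_enum inE => /andP [nS _] ->; exact: preim_nonempty.
  apply: (@short_of _ Q P v hQP x nx).
  exact: (@side _ _ pX sX F x nx xA).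
Qed.

Lemma vr_spec (X : finType) (N : X -> X -> R) (s : {set X}) :
  s != finset.set0 ->
  (forall x x', x \in s -> x' \in s -> N x x' <= VR N s) /\
  (exists x x', [/\ x \in s, x' \in s & VR N s = N x x']).
Proof.
move=> ns; rewrite /VR; case: pickP => [x0 x0s | none]; last first.
  by case/set0Pn: ns => x xs; have := none x; rewrite xs.
split.
  move=> x x' xs x's.
  have h : (x, x') \in finset.setX s s by rewrite finset.in_setX xs x's.
  exact: (le_bigmax_cond _ (j:=(x,x')) _ h).
apply: (big_ind (fun r => exists x x', [/\ x \in s, x' \in s & r = N x x'])).
- by exists x0, x0.
- move=> a b [x1 [x1' [h1 h1' ->]]] [x2 [x2' [h2 h2' ->]]].
  case: (leP (N x1 x1') (N x2 x2')) => _; [by exists x2, x2' | by exists x1, x1'].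
- move=> [x x'] /=; rewrite finset.in_setX => /andP [xs x's]; by exists x, x'.
Qed.
End Aux.

Theorem mainTheorem16 (R : realType) (X Y : finType) :
  (forall (F : {set X} -> R) (G : {set Y} -> R),
     filtration F -> filtration G ->
     (bottleneck (mgm F) (mgm G) <= tripod_dist F G)%E) /\
  (forall (N : X -> X -> R) (M : Y -> Y -> R),
     phylo N -> phylo M ->
     (bottleneck (mgm (VR N)) (mgm (VR M)) <= gh_dist N M)%E).
Proof.
split.
- move=> F G _ _; apply/ereal_infP => y [v [Z [pX [pY [sX [sY ev]]]]] <-].
  have hv : 0 <= v.
    rewrite ev /filt_distortion; apply: (big_ind (fun r => 0 <= r)) => //.
    by move=> a b ha hb; rewrite le_max ha.
  apply: ereal_inf_lbound; exists v => //; split => //.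
  apply: (@core R X Y Z F G pX pY v sX sY hv).
  move=> k nk; rewrite ev; exact: (le_bigmax_cond _ (j:=k) _ nk).
- move=> N M _ _; apply/ereal_infP => y [v [Z [pX [pY [sX [sY ev]]]]] <-].
  have hv : 0 <= v.
    rewrite ev /net_distortion; apply: (big_ind (fun r => 0 <= r)) => //.
    by move=> a b ha hb; rewrite le_max ha.
  have hz (z z' : Z) : `|N (pX z) (pX z') - M (pY z) (pY z')| <= v.
    rewrite ev; exact: (le_bigmax _ (fun p : Z * Z => `|N (pX p.1) (pX p.2) - M (pY p.1) (pY p.2)|) (z, z')).
  apply: ereal_inf_lbound; exists v => //; split => //.
  apply: (@core R X Y Z _ _ pX pY v sX sY hv).
  move=> k nk.
  have nX : pX @: k != finset.set0 by rewrite imset_eq0.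
  have nY : pY @: k != finset.set0 by rewrite imset_eq0.
  have [aX [x1 [x1' [h1 h1' e1]]]] := @vr_spec R _ N _ nX.
  have [aY [y1 [y1' [g1 g1' f1]]]] := @vr_spec R _ M _ nY.
  case/imsetP: h1 => z1 z1k q1; case/imsetP: h1' => z1' z1'k q2.
  case/imsetP: g1 => w1 w1k q3; case/imsetP: g1' => w1' w1'k q4.
  subst x1 x1' y1 y1'.
  have A1 := aY (pY z1) (pY z1') (imset_f _ z1k) (imset_f _ z1'k).
  have A2 := aX (pX w1) (pX w1') (imset_f _ w1k) (imset_f _ w1'k).
  have [B1 B2] := @abs_le R _ _ _ (hz z1 z1').
  have [C1 C2] := @abs_le R _ _ _ (hz w1 w1').
  rewrite e1 in A2 *; rewrite f1 in A1 *.
  rewrite ler_norml; apply/andP; split; lra.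
Qed.
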